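(* The map $\mathcal L:\mathcal X_M\to\mathcal X_\Lambda$, $\mathcal L(f)(\theta)=\log f(\theta)$ (with $\log\infty=\infty$), is continuous when both spaces carry $\tau_{AW}$.
   Context: For a probability measure $\nu$ let $f_\nu(\theta)=\int e^{\theta x}\nu(dx)\in(0,\infty]$. For $f:\mathbb R\to[-\infty,\infty]$, $\mathrm{epi}(f)=\{(\theta,b):b\ge f(\theta)\}$. On $\mathbb R^2$ use the box metric $d(x,y)=\max(|x_1-y_1|,|x_2-y_2|)$, $d(x,A)=\inf_{y\in A}d(x,y)$, $\overline B_k=\{x:d(0,x)\le k\}$. The Attouch–Wets topology $\tau_{AW}$ has local base at $f$ given by $V_k(f)=\{g:\sup_{x\in\overline B_k}|d(x,\mathrm{epi}(g))-d(x,\mathrm{epi}(f))|<1/k\}$, $k\in\mathbb N$. $\mathcal X_M$ = lower semicontinuous convex $f:\mathbb R\to(0,\infty]$ with $f(0)<\infty$ for which some probability measure $\nu$ satisfies $f(\theta)=f_\nu(\theta)$ whenever $f(\theta)<\infty$; $\mathcal X_\Lambda=\{\log g:g\in\mathcal X_M\}$. *)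

(* Defs.v *)
From Stdlib Require Import Reals List Classical ClassicalEpsilon.
Open Scope R_scope.

(* Extended reals (-oo is never needed: all functions here take values in
   (-oo, +oo]). *)
Inductive Rbarp := Fin (r : R) | PInf.

(* Inf / sup of a set of reals (classical choice; junk value 0 if none). *)
Definition is_glb (P : R -> Prop) (m : R) : Prop :=
  (forall x, P x -> m <= x) /\ (forall b, (forall x, P x -> b <= x) -> b <= m).

Definition Rinf (P : R -> Prop) : R :=
  match excluded_middle_informative (exists m, is_glb P m) with
  | left h => proj1_sig (constructive_indefinite_description _ h)
  | right _ => 0
  end.

Definition Rsup (P : R -> Prop) : R :=
  match excluded_middle_informative (exists m, is_lub P m) with
  | left h => proj1_sig (constructive_indefinite_description _ h)
  | right _ => 0
  end.

Inductive borel : (R -> Prop) -> Prop :=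
| borel_halfline (a : R) : borel (fun x => x <= a)
| borel_compl (A : R -> Prop) : borel A -> borel (fun x => ~ A x)
| borel_union (A : nat -> R -> Prop) :
    (forall n, borel (A n)) -> borel (fun x => exists n, A n x)
| borel_ext (A B : R -> Prop) : borel A -> (forall x, A x <-> B x) -> borel B.

Record prob_measure := {
  pm :> (R -> Prop) -> R;
  pm_nonneg : forall A, borel A -> 0 <= pm A;
  pm_total : pm (fun _ => True) = 1;
  pm_sigma : forall A : nat -> R -> Prop,
      (forall n, borel (A n)) ->
      (forall n m, n <> m -> forall x, A n x -> A m x -> False) ->
      infinite_sum (fun n => pm (A n)) (pm (fun x => exists n, A n x))
}.

Definition simple_eval (s : list (R * (R -> Prop))) (x : R) : R :=
  fold_right (fun p acc =>
    (if excluded_middle_informative (snd p x) then fst p else 0) + acc) 0 s.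

Definition simple_integral (nu : prob_measure) (s : list (R * (R -> Prop))) : R :=
  fold_right (fun p acc => fst p * nu (snd p) + acc) 0 s.

Definition simple_below (g : R -> R) (s : list (R * (R -> Prop))) : Prop :=
  Forall (fun p => 0 <= fst p /\ borel (snd p)) s /\
  forall x, simple_eval s x <= g x.

Definition integral (nu : prob_measure) (g : R -> R) : Rbarp :=
  let S := fun r => exists s, simple_below g s /\ r = simple_integral nu s in
  match excluded_middle_informative (exists M, forall r, S r -> r <= M) with
  | left _ => Fin (Rsup S)
  | right _ => PInf
  end.

Definition mgf (nu : prob_measure) (theta : R) : Rbarp :=
  integral nu (fun x => exp (theta * x)).

Definition lt_ER (a : R) (v : Rbarp) : Prop :=
  match v with Fin r => a < r | PInf => True end.

Definition lsc (f : R -> Rbarp) : Prop :=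
  forall theta a, lt_ER a (f theta) ->
    exists delta, 0 < delta /\
      forall theta', Rabs (theta' - theta) < delta -> lt_ER a (f theta').

Definition convexf (f : R -> Rbarp) : Prop :=
  forall x y t a b, 0 < t < 1 -> f x = Fin a -> f y = Fin b ->
    exists c, f (t * x + (1 - t) * y) = Fin c /\ c <= t * a + (1 - t) * b.

Definition XM (f : R -> Rbarp) : Prop :=
  lsc f /\ convexf f /\
  (forall theta r, f theta = Fin r -> 0 < r) /\
  (exists r, f 0 = Fin r) /\
  (exists nu : prob_measure, forall theta r, f theta = Fin r -> mgf nu theta = Fin r).

Definition Llog (f : R -> Rbarp) : R -> Rbarp :=
  fun theta => match f theta with Fin r => Fin (ln r) | PInf => PInf end.

Definition XLambda (h : R -> Rbarp) : Prop := exists g, XM g /\ h = Llog g.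

Definition dbox (x y : R * R) : R :=
  Rmax (Rabs (fst x - fst y)) (Rabs (snd x - snd y)).

Definition epi (f : R -> Rbarp) (p : R * R) : Prop :=
  match f (fst p) with Fin r => r <= snd p | PInf => False end.

Definition dist_set (x : R * R) (A : R * R -> Prop) : R :=
  Rinf (fun r => exists y, A y /\ r = dbox x y).

Definition closed_ball (k : nat) (x : R * R) : Prop := dbox (0, 0) x <= INR k.

(* V_k(f) for k in N = {1,2,...} *)
Definition AW_nbhd (k : nat) (f g : R -> Rbarp) : Prop :=
  Rsup (fun r => exists x, closed_ball k x /\
          r = Rabs (dist_set x (epi g) - dist_set x (epi f))) < 1 / INR k.

(* Main.v *)
Require Import Defs.
From Stdlib Require Import Reals Lra Lia ZArith Classical ClassicalEpsilon.
Open Scope R_scope.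

Lemma nat_above (x : R) : exists n : nat, x <= INR n.
Proof.
  destruct (Rle_or_lt x 0) as [H|H].
  - exists 0%nat; simpl; lra.
  - destruct (archimed x) as [H1 H2].
    assert (Hz : (0 <= up x)%Z) by (apply le_IZR; lra).
    exists (Z.to_nat (up x)). rewrite INR_IZR_INZ, Z2Nat.id by exact Hz. lra.
Qed.

Lemma ln_le_mono x y : 0 < x -> x <= y -> ln x <= ln y.
Proof. intros Hx [H|H]; [left; apply ln_increasing; auto | subst; lra]. Qed.

Lemma exp_le_mono x y : x <= y -> exp x <= exp y.
Proof. intros [H|H]; [left; apply exp_increasing; auto | subst; lra]. Qed.

Lemma dbox_ge0 x y : 0 <= dbox x y.
Proof. unfold dbox. eapply Rle_trans; [apply Rabs_pos | apply Rmax_l]. Qed.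

Lemma dbox_self x : dbox x x = 0.
Proof. unfold dbox. rewrite !Rminus_diag, Rabs_R0. unfold Rmax; destruct Rle_dec; lra. Qed.

Lemma dbox_sym x y : dbox x y = dbox y x.
Proof. unfold dbox. rewrite (Rabs_minus_sym (fst x)), (Rabs_minus_sym (snd x)). reflexivity. Qed.

Lemma dbox_triang x y z : dbox x z <= dbox x y + dbox y z.
Proof.
  unfold dbox. apply Rmax_lub.
  - replace (fst x - fst z) with ((fst x - fst y) + (fst y - fst z)) by ring.
    eapply Rle_trans; [apply Rabs_triang|].
    apply Rplus_le_compat; apply Rmax_l.
  - replace (snd x - snd z) with ((snd x - snd y) + (snd y - snd z)) by ring.
    eapply Rle_trans; [apply Rabs_triang|].
    apply Rplus_le_compat; apply Rmax_r.
Qed.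

Lemma dbox_fst x y : Rabs (fst x - fst y) <= dbox x y.
Proof. apply Rmax_l. Qed.
Lemma dbox_snd x y : Rabs (snd x - snd y) <= dbox x y.
Proof. apply Rmax_r. Qed.

Lemma Rinf_glb (P : R -> Prop) :
  (exists x, P x) -> (forall x, P x -> 0 <= x) -> is_glb P (Rinf P).
Proof.
  intros [x0 Hx0] Hpos.
  assert (Hex : exists m, is_glb P m).
  { set (L := fun b => forall x, P x -> b <= x).
    assert (HB : bound L) by (exists x0; intros b Hb; apply Hb; auto).
    assert (HL : exists b, L b) by (exists 0; intros x Hx; auto).
    destruct (completeness L HB HL) as [m [Hm1 Hm2]].
    exists m. split.
    - intros x Hx. apply Hm2. intros b Hb. apply Hb; auto.
    - intros b Hb. apply Hm1. exact Hb. }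
  unfold Rinf. destruct excluded_middle_informative as [h|h]; [|contradiction].
  destruct constructive_indefinite_description; simpl; auto.
Qed.

Lemma Rsup_lub (P : R -> Prop) :
  (exists x, P x) -> (exists M, forall x, P x -> x <= M) -> is_lub P (Rsup P).
Proof.
  intros Hne [M HM].
  assert (Hex : exists m, is_lub P m).
  { destruct (completeness P) as [m Hm]; [exists M; intros x Hx; auto | auto | exists m; auto]. }
  unfold Rsup. destruct excluded_middle_informative as [h|h]; [|contradiction].
  destruct constructive_indefinite_description; simpl; auto.
Qed.

Lemma dist_glb x A : (exists y, A y) ->
  is_glb (fun r => exists y, A y /\ r = dbox x y) (dist_set x A).
Proof.
  intros [y Hy]. apply Rinf_glb.
  - exists (dbox x y); eauto.
  - intros r [z [_ ->]]; apply dbox_ge0.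
Qed.

Lemma dist_le x A y : A y -> dist_set x A <= dbox x y.
Proof. intros Hy. destruct (dist_glb x A) as [H _]; eauto. Qed.

Lemma dist_ge0 x A : (exists y, A y) -> 0 <= dist_set x A.
Proof.
  intros Hne. destruct (dist_glb x A Hne) as [_ H]. apply H.
  intros r [z [_ ->]]; apply dbox_ge0.
Qed.

Lemma dist_lt x A c : (exists y, A y) -> dist_set x A < c ->
  exists y, A y /\ dbox x y < c.
Proof.
  intros Hne Hlt. destruct (dist_glb x A Hne) as [_ H].
  apply NNPP. intro Hn. assert (c <= dist_set x A); [|lra].
  apply H. intros r [z [Hz ->]].
  apply Rnot_lt_le. intro Hc. apply Hn. eauto.
Qed.

Lemma dist_self x A : A x -> dist_set x A = 0.
Proof.
  intros Hx. apply Rle_antisym.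
  - rewrite <- (dbox_self x). apply dist_le; auto.
  - apply dist_ge0; eauto.
Qed.

Definition Exc (A B : R * R -> Prop) (Rr e : R) : Prop :=
  forall p, A p -> dbox (0,0) p <= Rr -> exists q, B q /\ dbox p q < e.

Lemma exc_mono A B R1 R2 e : R1 <= R2 -> Exc A B R2 e -> Exc A B R1 e.
Proof. intros H1 H p Hp Hb. apply H; auto; lra. Qed.

Lemma exc_dist A B Rr e k M y0 x :
  A y0 -> dbox (0,0) y0 <= M -> (exists z, B z) -> Exc A B Rr e ->
  2 * k + M + 1 <= Rr -> 0 < e -> dbox (0,0) x <= k ->
  dist_set x B <= dist_set x A + e.
Proof.
  intros Hy0 HM HB HE HR He Hx.
  apply Rnot_lt_le. intro Hc.
  assert (HdAx : exists dA, dA = dist_set x A) by eauto. destruct HdAx as [dA EA].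
  assert (HdBx : exists dB, dB = dist_set x B) by eauto. destruct HdBx as [dB EB].
  rewrite <- EA, <- EB in *.
  set (eta := Rmin 1 (dB - dA - e)).
  assert (Heta : 0 < eta) by (unfold eta; apply Rmin_glb_lt; lra).
  assert (Heta1 : eta <= 1) by apply Rmin_l.
  assert (Heta2 : eta <= dB - dA - e) by apply Rmin_r.
  destruct (dist_lt x A (dA + eta)) as [y [Hy Hxy]]; [eauto | rewrite <- EA; lra |].
  assert (HdA : dA <= k + M).
  { apply Rle_trans with (dbox x y0); [rewrite EA; apply dist_le; auto|].
    pose proof (dbox_triang x (0,0) y0). rewrite (dbox_sym x (0,0)) in H. lra. }
  assert (Hy0b : dbox (0,0) y <= Rr).
  { pose proof (dbox_triang (0,0) x y). lra. }
  destruct (HE y Hy Hy0b) as [q [Hq Hyq]].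
  assert (dB <= dbox x q) by (rewrite EB; apply dist_le; auto).
  pose proof (dbox_triang x y q). lra.
Qed.

Lemma Rabs_le_inv x y : Rabs x <= y -> -y <= x <= y.
Proof. unfold Rabs; destruct Rcase_abs; intros; lra. Qed.

Definition posf (f : R -> Rbarp) := forall t r, f t = Fin r -> 0 < r.

Lemma epi_Llog f t s : posf f -> epi (Llog f) (t, s) <-> epi f (t, exp s).
Proof.
  intros Hp. unfold epi, Llog; simpl.
  destruct (f t) as [r|] eqn:E; [|tauto].
  pose proof (Hp t r E). split; intros H0.
  - rewrite <- (exp_ln r) by auto. apply exp_le_mono; auto.
  - rewrite <- (ln_exp s). apply ln_le_mono; auto.
Qed.

Lemma epi_up f t b b' : epi f (t, b) -> b <= b' -> epi f (t, b').
Proof. unfold epi; simpl. destruct (f t); auto; lra. Qed.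

Lemma exc_log f g Rr d : posf f -> posf g -> 0 < d -> 0 <= Rr ->
  Exc (epi f) (epi g) (Rmax Rr (exp Rr)) d ->
  Exc (epi (Llog f)) (epi (Llog g)) Rr (d * (1 + exp Rr)).
Proof.
  intros Hf Hg Hd HR0 HE [t s] Hp Hb.
  apply epi_Llog in Hp; auto.
  pose proof (dbox_fst (0,0) (t,s)) as Ht. pose proof (dbox_snd (0,0) (t,s)) as Hs.
  simpl in Ht, Hs. rewrite Rminus_0_l, Rabs_Ropp in Ht, Hs.
  assert (Hb2 : dbox (0,0) (t, exp s) <= Rmax Rr (exp Rr)).
  { unfold dbox; simpl. rewrite !Rminus_0_l, !Rabs_Ropp.
    apply Rmax_lub.
    - eapply Rle_trans; [|apply Rmax_l]; lra.
    - eapply Rle_trans; [|apply Rmax_r].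
      rewrite Rabs_right by (left; apply exp_pos).
      apply exp_le_mono. apply Rabs_le_inv in Hs. lra. }
  destruct (HE _ Hp Hb2) as [[t' b'] [Hq Hd']].
  pose proof (dbox_fst (t, exp s) (t', b')) as H1.
  pose proof (dbox_snd (t, exp s) (t', b')) as H2. simpl in H1, H2.
  exists (t', ln (exp s + d)). split.
  - apply epi_Llog; auto. rewrite exp_ln by (pose proof (exp_pos s); lra).
    apply epi_up with b'; auto. apply Rabs_le_inv in H2. lra.
  - assert (Hes := exp_pos s). assert (HeR := exp_pos Rr).
    assert (Hlo : s < ln (exp s + d)).
    { rewrite <- (ln_exp s) at 1. apply ln_increasing; lra. }
    assert (Hhi : ln (exp s + d) < s + d * exp (- s)).
    { rewrite <- (ln_exp (s + d * exp (-s))). apply ln_increasing; [lra|].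
      rewrite exp_plus. assert (Hx : 0 < d * exp (-s)) by (apply Rmult_lt_0_compat; auto; apply exp_pos).
      pose proof (exp_ineq1 (d * exp (-s)) ltac:(lra)).
      assert (exp s * exp (-s) = 1) by (rewrite exp_Ropp; field; lra).
      apply Rle_lt_trans with (exp s * (1 + d * exp (- s))); [nra|].
      apply Rmult_lt_compat_l; lra. }
    assert (Hmx : exp (-s) <= exp Rr) by (apply exp_le_mono; apply Rabs_le_inv in Hs; lra).
    unfold dbox; simpl. apply Rmax_lub_lt.
    + assert (d <= d * (1 + exp Rr)) by nra. lra.
    + rewrite Rabs_left by lra.
      assert (d * exp (-s) <= d * exp Rr) by (apply Rmult_le_compat_l; lra). nra.
Qed.

Lemma Rabs_diff_le a b : 0 <= a -> 0 <= b -> Rabs (a - b) <= a + b.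
Proof. intros; unfold Rabs; destruct Rcase_abs; lra. Qed.

Lemma AW_exc k f g yf yg : epi f yf -> epi g yg -> AW_nbhd k f g ->
  forall p, closed_ball k p ->
  Rabs (dist_set p (epi g) - dist_set p (epi f)) < 1 / INR k.
Proof.
  intros Hf Hg HAW p Hp. unfold AW_nbhd in HAW.
  match type of HAW with Rsup ?S < _ => set (P := S) in HAW end.
  assert (HL : is_lub P (Rsup P)).
  { apply Rsup_lub.
    - exists (Rabs (dist_set (0,0) (epi g) - dist_set (0,0) (epi f))), (0,0).
      split; auto. unfold closed_ball. rewrite dbox_self. apply pos_INR.
    - exists (2 * INR k + dbox (0,0) yf + dbox (0,0) yg).
      intros r [x [Hx ->]]. unfold closed_ball in Hx.
      eapply Rle_trans; [apply Rabs_diff_le; apply dist_ge0; eauto|].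
      pose proof (dist_le x _ _ Hf). pose proof (dist_le x _ _ Hg).
      pose proof (dbox_triang x (0,0) yf). pose proof (dbox_triang x (0,0) yg).
      rewrite (dbox_sym x (0,0)) in *. lra. }
  destruct HL as [HU _].
  assert (Rabs (dist_set p (epi g) - dist_set p (epi f)) <= Rsup P).
  { apply HU. exists p; auto. }
  lra.
Qed.

Lemma AW_exc2 k f g yf yg : epi f yf -> epi g yg -> AW_nbhd k f g ->
  Exc (epi f) (epi g) (INR k) (1 / INR k) /\ Exc (epi g) (epi f) (INR k) (1 / INR k).
Proof.
  intros Hf Hg HAW. split; intros p Hp Hb;
  pose proof (AW_exc k f g yf yg Hf Hg HAW p Hb) as H.
  - rewrite (dist_self p (epi f)) in H by auto.
    apply dist_lt; eauto. rewrite Rminus_0_r in H.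
    eapply Rle_lt_trans; [apply Rle_abs|exact H].
  - rewrite (dist_self p (epi g)) in H by auto.
    apply dist_lt; eauto. rewrite Rminus_0_l, Rabs_Ropp in H.
    eapply Rle_lt_trans; [apply Rle_abs|exact H].
Qed.

Lemma XM_pos f : XM f -> posf f.
Proof. intros (_ & _ & H & _). exact H. Qed.

Lemma XM_0 f : XM f -> exists r, epi f (0, r).
Proof. intros (_ & _ & _ & [r Hr] & _). exists r. unfold epi; simpl. rewrite Hr. lra. Qed.

Theorem mainTheorem10 :
  forall f : R -> Rbarp, XM f ->
  forall k : nat, (1 <= k)%nat ->
  exists k' : nat, (1 <= k')%nat /\
    forall g : R -> Rbarp, XM g -> AW_nbhd k' f g ->
      AW_nbhd k (Llog f) (Llog g).
Proof.
  intros f Hf k Hk.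
  assert (HkR : 1 <= INR k) by (apply (le_INR 1); auto).
  destruct Hf as (Hf1 & Hf2 & Hfp & [r0 Hr0] & Hf5).
  assert (HXf : XM f) by (repeat split; auto; eauto).
  assert (Hr0p : 0 < r0) by (eapply Hfp; eauto).
  set (y0 := (0, ln r0)).
  assert (Hy0 : epi (Llog f) y0).
  { unfold y0. apply epi_Llog; auto. unfold epi; simpl. rewrite Hr0, exp_ln; lra. }
  set (M := dbox (0,0) y0).
  assert (HM0 : 0 <= M) by apply dbox_ge0.
  set (Rr := 2 * INR k + M + 2).
  assert (HeR := exp_pos Rr).
  set (X := Rmax Rr (exp Rr) + 2 * INR k * (1 + exp Rr) + 1).
  destruct (nat_above X) as [k' Hk'].
  assert (HmxR : Rr <= Rmax Rr (exp Rr)) by apply Rmax_l.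
  assert (HmxE : exp Rr <= Rmax Rr (exp Rr)) by apply Rmax_r.
  assert (HXpos : 0 <= 2 * INR k * (1 + exp Rr)) by nra.
  assert (Hk'1 : 1 <= INR k') by (unfold X in Hk'; nra).
  exists k'. split.
  { destruct k'; [simpl in Hk'1; lra | lia]. }
  intros g Hg HAW.
  pose proof (XM_pos g Hg) as Hgp.
  destruct (XM_0 f HXf) as [rf Hrf]. destruct (XM_0 g Hg) as [rg Hrg].
  destruct (AW_exc2 k' f g _ _ Hrf Hrg HAW) as [E1 E2].
  set (d := 1 / INR k') in *.
  assert (Hd : 0 < d) by (unfold d; apply Rdiv_lt_0_compat; lra).
  assert (Hde : d * (1 + exp Rr) <= 1 / (2 * INR k)).
  { unfold d. apply Rmult_le_reg_r with (INR k' * (2 * INR k)); [nra|].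
    field_simplify; try lra.
    unfold X in Hk'. nra. }
  set (e1 := d * (1 + exp Rr)) in *.
  assert (He1 : 0 < e1) by (unfold e1; nra).
  assert (He1b : e1 <= 1 / 2).
  { eapply Rle_trans; [exact Hde|]. apply Rmult_le_reg_r with (2 * INR k); [lra|].
    field_simplify; lra. }
  assert (L1 : Exc (epi (Llog f)) (epi (Llog g)) Rr e1).
  { apply exc_log; auto; [unfold Rr; lra|]. eapply exc_mono; [|exact E1]. unfold X in Hk'; lra. }
  assert (L2 : Exc (epi (Llog g)) (epi (Llog f)) Rr e1).
  { apply exc_log; auto; [unfold Rr; lra|]. eapply exc_mono; [|exact E2]. unfold X in Hk'; lra. }
  assert (HMR : M <= Rr) by (unfold Rr; lra).
  destruct (L1 y0 Hy0 ltac:(unfold M in HMR; exact HMR)) as [q0 [Hq0 Hq0d]].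
  assert (Hq0M : dbox (0,0) q0 <= M + 1).
  { pose proof (dbox_triang (0,0) y0 q0). unfold M. lra. }
  assert (Hbound : forall x, closed_ball k x ->
    Rabs (dist_set x (epi (Llog g)) - dist_set x (epi (Llog f))) <= e1).
  { intros x Hx. unfold closed_ball in Hx.
    pose proof (exc_dist (epi (Llog f)) (epi (Llog g)) Rr e1 (INR k) M y0 x Hy0 (Rle_refl _) (ex_intro _ q0 Hq0) L1
      ltac:(unfold Rr; lra) He1 Hx).
    pose proof (exc_dist (epi (Llog g)) (epi (Llog f)) Rr e1 (INR k) (M + 1) q0 x Hq0 Hq0M (ex_intro _ y0 Hy0) L2
      ltac:(unfold Rr; lra) He1 Hx).
    unfold Rabs; destruct Rcase_abs; lra. }
  unfold AW_nbhd.
  match goal with |- Rsup ?S < _ => set (P := S) end.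
  assert (HL : is_lub P (Rsup P)).
  { apply Rsup_lub.
    - eexists; exists (0,0). split; [|reflexivity].
      unfold closed_ball. rewrite dbox_self. apply pos_INR.
    - exists e1. intros r [x [Hx ->]]. apply Hbound; auto. }
  destruct HL as [_ HL].
  assert (Rsup P <= e1) by (apply HL; intros r [x [Hx ->]]; apply Hbound; auto).
  assert (1 / (2 * INR k) < 1 / INR k).
  { apply Rmult_lt_reg_r with (2 * INR k); [lra|]. field_simplify; lra. }
  lra.
Qed.
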